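(* Let $n=2^k$ for some $k\in\mathbb{N}$. Then the path graph on $n$ nodes is reachable (observable) from any single node $i\in\{1,\dots,n\}$, i.e. the pair $(L_n,e_i)$ is reachable (and $(L_n,e_i^T)$ is observable) for every $i$.
   Context: The path graph on nodes $\{1,\dots,n\}$ has edges $\{i,i+1\}$; its Laplacian $L_n$ is tridiagonal with diagonal $(1,2,\dots,2,1)$ and off-diagonal entries $-1$. Reachability of $(L_n,e_i)$ means $[e_i|L_ne_i|\cdots|L_n^{n-1}e_i]$ has rank $n$. *)

(* Defs.v *)
From mathcomp Require Import all_boot all_order all_algebra.
Set Implicit Arguments. Unset Strict Implicit. Unset Printing Implicit Defensive.
Import Order.TTheory GRing.Theory Num.Theory.
Local Open Scope ring_scope.

(* Nodes 1..n of the paper are the ordinals 0..n-1 of 'I_n. *)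

(* Laplacian of the path graph with edges {i, i+1}:
   diagonal = degree (1 at the ends, 2 inside), -1 on the off-diagonals. *)
Definition path_laplacian (R : pzRingType) (n : nat) : 'M[R]_n :=
  \matrix_(i < n, j < n)
    if i == j then ((0 < i)%N + (i.+1 < n)%N)%:R
    else if (i.+1 == j)%N || (j.+1 == i)%N then -1 else 0.

Definition basis_col (R : pzRingType) (n : nat) (i : 'I_n) : 'cV[R]_n :=
  delta_mx i 0.

Definition reach_mx (R : pzRingType) (n : nat) (A : 'M[R]_n) (b : 'cV[R]_n)
  : 'M[R]_n :=
  \matrix_(r < n, c < n) (iter c (mulmx A) b) r 0.

Definition obs_mx (R : pzRingType) (n : nat) (A : 'M[R]_n) (c : 'rV[R]_n)
  : 'M[R]_n :=
  \matrix_(r < n, j < n) (iter r (fun v => v *m A) c) 0 j.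

Definition reachable (R : fieldType) (n : nat) (A : 'M[R]_n) (b : 'cV[R]_n) :=
  \rank (reach_mx A b) = n.

Definition observable (R : fieldType) (n : nat) (A : 'M[R]_n) (c : 'rV[R]_n) :=
  \rank (obs_mx A c) = n.

(* Main.v *)
Require Import Defs.
From mathcomp Require Import all_boot all_order all_algebra.
From mathcomp Require Import ring lra zify.
Set Implicit Arguments. Unset Strict Implicit. Unset Printing Implicit Defensive.
Import Order.TTheory GRing.Theory Num.Theory.
Local Open Scope ring_scope.

Lemma modz_refl (d j : int) : 0 < d -> ((-1 - j) %% d)%Z = d - 1 - (j %% d)%Z.
Proof.
move=> d0.
rewrite {1}(divz_eq j d).
have -> : -1 - ((j %/ d)%Z * d + (j %% d)%Z) = (- (j %/ d)%Z - 1) * d + (d - 1 - (j %% d)%Z) by ring.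
rewrite modzMDl modz_small //.
have := modz_ge0 j (lt0r_neq0 d0) ; have := ltz_pmod j d0. lia.
Qed.
Lemma modz_refl2 (d j : int) : 0 < d -> ((d - 1 - j) %% d)%Z = d - 1 - (j %% d)%Z.
Proof.
move=> d0. rewrite -modz_refl //.
have -> : d - 1 - j = 1 * d + (-1 - j) by ring.
by rewrite modzMDl.
Qed.

Section Char2.
Variable F : fieldType.
Hypothesis h2 : (2%:R : F) = 0.

Lemma c2 (x : F) : x + x = 0.
Proof. by rewrite -mulr2n -mulr_natr h2 mulr0. Qed.

Definition D (u : int -> F) : int -> F := fun j => u (j - 1) + u (j + 1).

Lemma Dpow2 k u j : iter (2 ^ k) D u j = u (j - (2 ^ k)%:Z) + u (j + (2 ^ k)%:Z).
Proof.
elim: k u j => [|k IH] u j; first by [].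
rewrite expnS mul2n -addnn iterD IH !IH.
have -> : j - (2 ^ k)%:Z + (2 ^ k)%:Z = j by ring.
have -> : j + (2 ^ k)%:Z - (2 ^ k)%:Z = j by ring.
rewrite PoszD.
have -> : j - (2 ^ k)%:Z - (2 ^ k)%:Z = j - ((2 ^ k)%:Z + (2 ^ k)%:Z) by ring.
have -> : j + (2 ^ k)%:Z + (2 ^ k)%:Z = j + ((2 ^ k)%:Z + (2 ^ k)%:Z) by ring.
by rewrite -addrA (addrA (u j)) c2 add0r.
Qed.

Lemma shift_sum (f : nat -> F) a :
  \sum_(a <= i < a + a) f i = \sum_(0 <= i < a) f (i + a)%N.
Proof. by rewrite -{1}[a]add0n big_addn addnK. Qed.

Lemma DpowPred k u j : iter (2 ^ k - 1) D u j =
  \sum_(0 <= s < 2 ^ k) u (j - (2 ^ k)%:Z + 1 + 2 * s%:Z).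
Proof.
elim: k u j => [|k IH] u j.
  by rewrite /= big_nat1 /=; congr u; ring.
have e : (2 ^ k.+1 - 1 = 2 ^ k + (2 ^ k - 1))%N.
  by rewrite expnS mul2n -addnn addnBA // expn_gt0.
rewrite e iterD Dpow2 !IH.
rewrite expnS mul2n -addnn [in RHS](big_cat_nat (n:=2^k)) ?leq_addr //=.
rewrite shift_sum.
congr (_ + _); apply: eq_bigr => s _; congr u; rewrite ?PoszD; ring.
Qed.


Lemma oppc2 (x : F) : - x = x.
Proof. by apply/eqP; rewrite eq_sym -subr_eq0 opprK c2. Qed.

Variable n : nat.
Hypothesis n_gt0 : (0 < n)%N.

Definition sym (u : int -> F) :=
  forall j, u (-1 - j) = u j /\ u (2 * n%:Z - 1 - j) = u j.

Lemma symD u : sym u -> sym (D u).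
Proof.
move=> su j; rewrite /D; split.
  have -> : -1 - j - 1 = -1 - (j + 1) by ring.
  have -> : -1 - j + 1 = -1 - (j - 1) by ring.
  by rewrite !(su _).1 addrC.
have -> : 2 * n%:Z - 1 - j - 1 = 2 * n%:Z - 1 - (j + 1) by ring.
have -> : 2 * n%:Z - 1 - j + 1 = 2 * n%:Z - 1 - (j - 1) by ring.
by rewrite !(su _).2 addrC.
Qed.

Lemma sym_iter m u : sym u -> sym (iter m D u).
Proof. by move=> su; elim: m => //= m IH; apply: symD. Qed.

Lemma sym_per u j : sym u -> u (j + 2 * n%:Z) = u j.
Proof.
move=> su; rewrite -[RHS](su j).1 -(su (-1 - j)).2; congr u; ring.
Qed.

Lemma sum_delta (f : nat -> F) m :
  \sum_(l < n) (l == m :> nat)%:R * f l = (m < n)%:R * f m.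
Proof.
case: (ltnP m n) => hm.
  rewrite (bigD1 (Ordinal hm)) //= eqxx mul1r big1 ?addr0 ?mul1r // => l hl.
  rewrite (_ : (l == m :> nat) = false) ?mul0r //.
  by apply/negP => /eqP e; move: hl; rewrite /= -val_eqE /= e eqxx.
rewrite mul0r big1 // => l _; rewrite (_ : (l == m :> nat) = false) ?mul0r //.
by apply/negP => /eqP e; move: (ltn_ord l); rewrite e ltnNge hm.
Qed.

Lemma lap_entry (i l : 'I_n) : path_laplacian F n i l =
  (l == i :> nat)%:R * (((0 < i)%N + (i.+1 < n)%N)%:R)
  - (l == i.+1 :> nat)%:R - (l.+1 == i :> nat)%:R.
Proof.
rewrite /path_laplacian mxE.
case: (eqVneq i l) => [->|hil].
  by rewrite !eqxx mul1r (gtn_eqF (ltnSn l)) (ltn_eqF (ltnSn l)) !subr0.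
have hil' : (l == i :> nat) = false by apply/negP => /eqP/val_inj e; rewrite e eqxx in hil.
rewrite hil' mul0r sub0r.
have [e1|e1] := eqVneq (l : nat) i.+1.
  rewrite e1 /=.
  have -> : (i.+2 == i) = false by rewrite gtn_eqF // ltnS leqnSn.
  by rewrite subr0.
rewrite /= oppr0 sub0r.
by case: (l.+1 == i :> nat); rewrite /= ?oppr0.
Qed.

Lemma restrictD u (su : sym u) (i : 'I_n) :
  D u i%:Z = (path_laplacian F n *m \col_l u (l : nat)%:Z) i 0.
Proof.
rewrite mxE.
under eq_bigr => l _ do rewrite lap_entry mxE !mulrBl -mulrA.
rewrite !big_split /= !sumrN.
rewrite (sum_delta (fun l => _ * u l%:Z)) (sum_delta (fun l => u l%:Z)) ltn_ord mul1r.

have -> : \sum_(l < n) (l.+1 == i :> nat)%:R * u l%:Z = (0 < i)%N%:R * u (i%:Z - 1).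
  case: (posnP i) => hi.
    by rewrite hi mul0r big1 // => l _ /=; rewrite mul0r.
  rewrite mul1r.
  have -> : i%:Z - 1 = (i.-1)%:Z by rewrite -{1}(prednK hi) -addn1 PoszD addrK.
  have := sum_delta (fun l => u l%:Z) (i.-1).
  rewrite (leq_ltn_trans (leq_pred _) (ltn_ord i)) mul1r => <-.
  apply: eq_bigr => l _; congr (_ * _).
  by rewrite -{1}(prednK hi) eqSS.
rewrite /D !oppc2 natrD mulrDl.
case: (posnP i) => hi; case: (ltnP i.+1 n) => hn /=.
- rewrite hi /= !mul0r !mul1r !add0r !addr0.
  have -> : u (-1) = u 0 by rewrite -(su 0).1 subr0.
  by [].
- have n1 : n = 1%N by apply/anti_leq; rewrite n_gt0 andbT; move: hn; rewrite hi.
  rewrite !mul0r !addr0 hi sub0r add0r.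
  have -> : u (-1) = u 0 by rewrite -(su 0).1 subr0.
  suff -> : u 1 = u 0 by rewrite c2.
  by rewrite -(su 0).2 n1; congr u.
- rewrite !mul1r c2 add0r addrC.
  by rewrite (_ : (i.+1)%:Z = i%:Z + 1) // -addn1 PoszD.
- have ei : i.+1 = n by apply/anti_leq; rewrite hn ltn_ord.
  rewrite !mul1r !mul0r !addr0 addrC; congr (_ + _).
  rewrite -(su (i%:Z + 1)).2; congr u.
  rewrite (_ : n%:Z = i%:Z + 1); first ring.
  have : (i.+1)%:Z = n%:Z by rewrite ei.
  by rewrite -addn1 PoszD => <-.
Qed.


Definition dd := 2 * n%:Z.

Definition ue (i0 : nat) (j : int) : F :=
  ((j %% dd)%Z == i0%:Z)%:R + ((j %% dd)%Z == dd - 1 - i0%:Z)%:R.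

Lemma dd_gt0 : 0 < dd.
Proof. rewrite /dd; have := n_gt0; lia. Qed.

Lemma sym_ue i0 : sym (ue i0).
Proof.
move=> j; rewrite /ue.
have H r : (dd - 1 - r == i0%:Z) = (r == dd - 1 - i0%:Z).
  by apply/idP/idP => /eqP h; apply/eqP; lia.
have H' r : (dd - 1 - r == dd - 1 - i0%:Z) = (r == i0%:Z).
  by apply/idP/idP => /eqP h; apply/eqP; lia.
rewrite modz_refl ?dd_gt0 // H H' addrC; split => //.
by rewrite -/dd modz_refl2 ?dd_gt0 // H H' addrC.
Qed.

Lemma ue_restr i0 (hi : (i0 < n)%N) (t : nat) (ht : (t < n)%N) :
  ue i0 t%:Z = (t == i0)%:R.
Proof.
rewrite /ue modz_small; last by rewrite /dd; lia.
rewrite eqz_nat (_ : (t%:Z == dd - 1 - i0%:Z) = false) ?addr0 //.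
by apply/negP => /eqP; rewrite /dd; lia.
Qed.

Definition Lap := path_laplacian F n.

Lemma iter_col u (su : sym u) m :
  iter m (mulmx Lap) (\col_l u (l : nat)%:Z) = \col_l (iter m D u) (l : nat)%:Z.
Proof.
elim: m => [|m IH] /=; first by [].
rewrite IH; apply/matrixP => a b; rewrite [RHS]mxE (ord1 b).
by rewrite restrictD //; apply: sym_iter.
Qed.

Lemma col_ue (i0 : 'I_n) : \col_l ue i0 (l : nat)%:Z = basis_col F i0.
Proof.
apply/matrixP => a b; rewrite !mxE (ord1 b) ue_restr ?ltn_ord // eqxx andbT.
by rewrite -val_eqE.
Qed.

Lemma evod (f : nat -> F) h :
  \sum_(0 <= t < h + h) f t = \sum_(0 <= s < h) f (2 * s)%N + \sum_(0 <= s < h) f (2 * s).+1.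
Proof.
elim: h => [|h IH]; first by rewrite !big_geq // addr0.
rewrite addnS addSn !big_nat_recr //= IH -!addrA; congr (_ + _).
by rewrite addnn -mul2n addrCA.
Qed.

Variable k : nat.
Hypothesis nk : n = (2 ^ k)%N.

Lemma fold_sum u (su : sym u) :
  \sum_(0 <= s < n) u (0 - n%:Z + 1 + 2 * s%:Z) = \sum_(0 <= t < n) u t%:Z.
Proof.
case: k nk => [|k'] nk'.
  by rewrite nk' !big_nat1 /=; congr u.
set h := (2 ^ k')%N.
have nh : n = (h + h)%N by rewrite nk' expnS mul2n addnn.
rewrite nh (big_cat_nat (n:=h)) ?leq_addr //= shift_sum evod; congr (_ + _); last first.
  apply: eq_bigr => s _; congr u; lia.
rewrite big_nat_rev /=; apply: congr_big_nat => // s /andP [_ hs].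
rewrite -(su _).1; congr u.
rewrite add0n; lia.
Qed.

Lemma krylov_last (i0 : 'I_n) : iter n (mulmx Lap) (basis_col F i0) = 0.
Proof.
rewrite -col_ue iter_col; last exact: sym_ue.
apply/matrixP => a b; rewrite !mxE {1}nk Dpow2 -nk.
rewrite -(sym_per (a%:Z - n%:Z) (sym_ue i0)).
by rewrite (_ : a%:Z - n%:Z + 2 * n%:Z = a%:Z + n%:Z) ?c2 //; ring.
Qed.

Lemma krylov_top (i0 : 'I_n) :
  (iter (n - 1) (mulmx Lap) (basis_col F i0)) (Ordinal n_gt0) 0 = 1.
Proof.
rewrite -col_ue iter_col; last exact: sym_ue.
rewrite mxE /= {1}nk DpowPred -nk.
rewrite (_ : \sum_(0 <= s < n) _ = \sum_(0 <= s < n) ue i0 (0 - n%:Z + 1 + 2 * s%:Z)); last first.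
  by apply: eq_bigr => s _; congr ue.
rewrite fold_sum; last exact: sym_ue.
rewrite big_mkord (eq_bigr (fun t : 'I_n => (t == i0 :> nat)%:R * 1)); last first.
  by move=> t _; rewrite ue_restr ?ltn_ord // mulr1.
transitivity ((i0 < n)%N%:R * (1:F)); last by rewrite ltn_ord mulr1.
rewrite -(sum_delta (fun _ => 1)).
by apply: eq_bigr => t _.
Qed.

Lemma iter_lin p (x : 'cV[F]_n) :
  iter p (mulmx Lap) x = iter p (mulmx Lap) 1%:M *m x.
Proof. by elim: p => [|p IH] /=; rewrite ?mul1mx // IH mulmxA. Qed.

Lemma krylov_zero (i0 : 'I_n) c : (n <= c)%N ->
  iter c (mulmx Lap) (basis_col F i0) = 0.
Proof.
move=> hc; rewrite -(subnK hc) iterD krylov_last.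
by elim: (c - n)%N => //= q ->; rewrite mulmx0.
Qed.

Lemma krylov_inj (i0 : 'I_n) (v : 'cV[F]_n) :
  reach_mx Lap (basis_col F i0) *m v = 0 -> v = 0.
Proof.
set w := fun c => iter c (mulmx Lap) (basis_col F i0).
have eK : reach_mx Lap (basis_col F i0) *m v = \sum_(c < n) v c 0 *: w c.
  apply/matrixP => a b; rewrite (ord1 b) !mxE summxE; apply: eq_bigr => c _.
  by rewrite !mxE mulrC.
rewrite eK => h0.
suff H : forall m, (m <= n)%N -> forall c : 'I_n, (c < m)%N -> v c 0 = 0.
  by apply/matrixP => a b; rewrite (ord1 b) mxE; apply: (H n) => //.
elim => [|m IH] hm c hc //.
have {}IH := IH (ltnW hm).
case: (ltngtP c m) => hcm; first exact: IH.
  by move: hc; rewrite ltnS leqNgt hcm.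
set p := (n - 1 - m)%N.
have := congr1 (mulmx (iter p (mulmx Lap) 1%:M)) h0.
rewrite mulmx0 mulmx_sumr.
under eq_bigr => c' _ do rewrite -scalemxAr -iter_lin -iterD.
move/matrixP => /(_ (Ordinal n_gt0) 0); rewrite summxE mxE.
rewrite (bigD1 c) //= big1 ?addr0.
  rewrite mxE hcm (_ : (p + m = n - 1)%N); last by rewrite /p; lia.
  by rewrite krylov_top mulr1.
move=> c' hc'; rewrite mxE.
case: (ltngtP c' m) => h.
- by rewrite IH // mul0r.
- by rewrite krylov_zero ?mxE ?mulr0 // /p; lia.
- by move: hc'; rewrite -val_eqE /= h hcm eqxx.
Qed.

Lemma krylov_unit (i0 : 'I_n) : reach_mx Lap (basis_col F i0) \in unitmx.
Proof.
rewrite -unitmx_tr -row_free_unit; apply: inj_row_free => v hv.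
have : reach_mx Lap (basis_col F i0) *m v^T = 0 by rewrite -[LHS]trmxK trmx_mul trmxK hv trmx0.
by move/krylov_inj => /(congr1 trmx); rewrite trmxK trmx0.
Qed.

End Char2.

Lemma two0 : (2%:R : 'F_2) = 0. Proof. by apply/eqP. Qed.

Lemma lap_map (R' : pzRingType) n :
  path_laplacian R' n = map_mx intr (path_laplacian int n).
Proof.
apply/matrixP => a b; rewrite !mxE.
by case: ifP => _; [rewrite rmorph_nat | case: ifP => _; rewrite ?rmorphN1 ?rmorph0].
Qed.

Lemma reach_map (aR rR : pzRingType) (f : {rmorphism aR -> rR}) n
  (A : 'M[aR]_n) (b : 'cV[aR]_n) :
  reach_mx (map_mx f A) (map_mx f b) = map_mx f (reach_mx A b).
Proof.
have H c : iter c (mulmx (map_mx f A)) (map_mx f b) = map_mx f (iter c (mulmx A) b).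
  by elim: c => //= c ->; rewrite map_mxM.
by apply/matrixP => a c; rewrite !mxE H mxE.
Qed.

Lemma basis_map (R' : pzRingType) n (i : 'I_n) :
  basis_col R' i = map_mx intr (basis_col int i).
Proof. by rewrite /basis_col map_delta_mx. Qed.

Lemma reach_det_int k (i : 'I_(2 ^ k)) :
  \det (reach_mx (path_laplacian int (2 ^ k)) (basis_col int i)) != 0.
Proof.
have n_gt0 : (0 < 2 ^ k)%N by rewrite expn_gt0.
have := krylov_unit two0 n_gt0 (erefl _) i.
rewrite /Lap lap_map basis_map reach_map unitmxE det_map_mx unitfE.
by apply: contra => /eqP ->; rewrite rmorph0.
Qed.

Lemma lap_tr (R' : pzRingType) n : (path_laplacian R' n)^T = path_laplacian R' n.
Proof.
apply/matrixP => a b; rewrite !mxE eq_sym orbC.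
by case: eqP => // ->.
Qed.

Unset Implicit Arguments.
Theorem mainTheorem9 (R : realFieldType) (k : nat) (i : 'I_(2 ^ k)) :
  reachable (path_laplacian R (2 ^ k)) (basis_col R i) /\
  observable (path_laplacian R (2 ^ k)) (basis_col R i)^T.
Proof.
have U : reach_mx (path_laplacian R (2 ^ k)) (basis_col R i) \in unitmx.
  rewrite lap_map basis_map reach_map unitmxE det_map_mx unitfE intr_eq0.
  exact: reach_det_int.
split; first exact: mxrank_unit.
rewrite /observable.
suff -> : obs_mx (path_laplacian R (2 ^ k)) (basis_col R i)^T =
          (reach_mx (path_laplacian R (2 ^ k)) (basis_col R i))^T.
  by rewrite mxrank_tr; apply: mxrank_unit.
have H r : iter r (fun v => v *m path_laplacian R (2 ^ k)) (basis_col R i)^T =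
           (iter r (mulmx (path_laplacian R (2 ^ k))) (basis_col R i))^T.
  by elim: r => //= r ->; rewrite trmx_mul lap_tr.
by apply/matrixP => a c; rewrite !mxE H mxE.
Qed.
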